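(* Let $0<\alpha<1$, $T>0$, $M\in\mathbb{N}^+$, $\Delta t=T/M$, $t_n=n\Delta t$, and let $u\in C^{k+1}[0,T]$, where $1\le i\le k\le 6$ are integers. Let $D^{\alpha}_{k,i}u(t_n)$ be the approximation of the Caputo derivative defined in the context. Then there is a constant $C$ (depending on $u$, $\alpha$, $k$, $i$, but not on $n$ or $\Delta t$) such that for all $k\le n\le M$: (i) if $1\le i<k\le 6$, $$\big|D_{k,i}^{\alpha}u(t_{n})-{}^{C}D^{\alpha}u(t_{n})\big|\le C\big(t_{n-k+i}^{-\alpha-1}\,\Delta t^{k+1}+\Delta t^{k+1-\alpha}\big);$$ (ii) if $i=k\in\{1,\dots,6\}$, $$\big|D_{k,k}^{\alpha}u(t_{n})-{}^{C}D^{\alpha}u(t_{n})\big|\le C\,\Delta t^{k+1-\alpha}.$$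
   Context: Caputo derivative of order $\alpha\in(0,1)$: ${}^{C}D^{\alpha}u(t)=\frac{1}{\Gamma(1-\alpha)}\int_0^t (t-\xi)^{-\alpha}u'(\xi)\,\mathrm{d}\xi$. Let $I_j=[t_{j-1},t_j]$. For integers $m\ge1$, $j$, $q$, let $p^{m}_{j,q}$ denote the polynomial of degree at most $m$ interpolating $u$ at the $m+1$ nodes $t_{j+q-m-1},t_{j+q-m},\dots,t_{j+q-1}$ (considered on $I_j$). For $1\le i\le k\le 6$ and $n\ge k$, let $P^{k}_{i,n}$ be the continuous piecewise polynomial on $[0,t_n]$ given on $I_j$ by: $P^{k}_{i,n}=p^{k-1}_{j,k-j}$ for $1\le j\le k-i$; $P^{k}_{i,n}=p^{k}_{j,i}$ for $k-i+1\le j\le n-i+1$; $P^{k}_{i,n}=p^{k}_{j,n+1-j}$ for $n-i+2\le j\le n$. Then $D^{\alpha}_{k,i}u(t_n)=\frac{1}{\Gamma(1-\alpha)}\int_0^{t_n}(t_n-\xi)^{-\alpha}\frac{\mathrm{d}}{\mathrm{d}\xi}P^{k}_{i,n}(\xi)\,\mathrm{d}\xi$. *)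

(* Defs.v *)
From Stdlib Require Import Reals.
From Coquelicot Require Import Coquelicot.
Open Scope R_scope.

Definition Gamma (s : R) : R :=
  RInt_gen (fun x => Rpower x (s - 1) * exp (- x))
    (at_right 0) (Rbar_locally p_infty).

Definition caputo (alpha : R) (u : R -> R) (t : R) : R :=
  / Gamma (1 - alpha) *
  RInt_gen (fun xi => Rpower (t - xi) (- alpha) * Derive u xi)
    (at_point 0) (at_left t).

Definition node (dt : R) (l : nat) : R := INR l * dt.

Fixpoint sumR (n : nat) (f : nat -> R) : R :=
  match n with O => 0 | S n' => sumR n' f + f n' end.
Fixpoint prodR (n : nat) (f : nat -> R) : R :=
  match n with O => 1 | S n' => prodR n' f * f n' end.

Definition interp (u : R -> R) (dt : R) (m s : nat) (x : R) : R :=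
  sumR (S m) (fun l =>
    u (node dt (s + l)) *
    prodR (S m) (fun r =>
      if Nat.eqb r l then 1
      else (x - node dt (s + r)) / (node dt (s + l) - node dt (s + r)))).

(* p^m_{j,q}: interpolant of u at t_(j+q-m-1), ..., t_(j+q-1).
   (In every use below j+q-m-1 >= 0, so nat subtraction is exact.) *)
Definition pmjq (u : R -> R) (dt : R) (m j q : nat) (x : R) : R :=
  interp u dt m (j + q - m - 1) x.

Definition piece (u : R -> R) (dt : R) (k i n j : nat) (x : R) : R :=
  if Nat.leb j (k - i) then pmjq u dt (k - 1) j (k - j) x
  else if Nat.leb j (n - i + 1) then pmjq u dt k j i x
  else pmjq u dt k j (n + 1 - j) x.

Definition in_seg (dt : R) (j : nat) (x : R) : bool :=
  if Rle_dec x (node dt j) then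
    (if Nat.eqb j 1 then (if Rle_dec (node dt 0) x then true else false)
     else (if Rlt_dec (node dt (j - 1)) x then true else false))
  else false.

Definition Pkin (u : R -> R) (dt : R) (k i n : nat) (x : R) : R :=
  sumR n (fun j0 => let j := S j0 in
    if in_seg dt j x then piece u dt k i n j x else 0).

Definition Dki (alpha : R) (k i : nat) (u : R -> R) (dt : R) (n : nat) : R :=
  / Gamma (1 - alpha) *
  RInt_gen
    (fun xi => Rpower (node dt n - xi) (- alpha) * Derive (Pkin u dt k i n) xi)
    (at_point 0) (at_left (node dt n)).

(* Main.v *)
Require Import Defs.
From Stdlib Require Import Reals Lra Lia Factorial.
From Coquelicot Require Import Coquelicot.
Open Scope R_scope.


Lemma sumR_ext N f g : (forall l, (l < N)%nat -> f l = g l) -> sumR N f = sumR N g.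
Proof. induction N; simpl; intros H; auto. rewrite IHN by (intros; apply H; lia). rewrite H by lia; auto. Qed.
Lemma prodR_ext N f g : (forall l, (l < N)%nat -> f l = g l) -> prodR N f = prodR N g.
Proof. induction N; simpl; intros H; auto. rewrite IHN by (intros; apply H; lia). rewrite H by lia; auto. Qed.
Lemma sumR_plus N f g : sumR N (fun l => f l + g l) = sumR N f + sumR N g.
Proof. induction N; simpl; [ring|rewrite IHN; ring]. Qed.
Lemma sumR_minus N f g : sumR N (fun l => f l - g l) = sumR N f - sumR N g.
Proof. induction N; simpl; [ring|rewrite IHN; ring]. Qed.
Lemma sumR_scal N c f : sumR N (fun l => c * f l) = c * sumR N f.
Proof. induction N; simpl; [ring|rewrite IHN; ring]. Qed.
Lemma sumR_swap N P a : sumR N (fun l => sumR P (fun p => a l p)) = sumR P (fun p => sumR N (fun l => a l p)).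
Proof. induction N; simpl.
- induction P; simpl; auto. rewrite <- IHP; ring.
- rewrite IHN. rewrite <- sumR_plus. auto. Qed.
Lemma sumR_abs_le N f B : (forall l, (l < N)%nat -> Rabs (f l) <= B) -> Rabs (sumR N f) <= INR N * B.
Proof. induction N; cbn [sumR]; intros H. simpl; rewrite Rabs_R0; lra.
  eapply Rle_trans. apply Rabs_triang. rewrite S_INR.
  assert (Rabs (sumR N f) <= INR N * B) by (apply IHN; intros; apply H; lia).
  assert (Rabs (f N) <= B) by (apply H; lia). lra. Qed.
Lemma sumR_single N f l0 : (l0 < N)%nat -> (forall l, (l < N)%nat -> l <> l0 -> f l = 0) -> sumR N f = f l0.
Proof. induction N; simpl; intros H1 H2. lia.
  destruct (Nat.eq_dec l0 N).
  - subst. rewrite (sumR_ext N f (fun _ => 0)). assert (forall n, sumR n (fun _ => 0) = 0) as Z.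
    { induction n; simpl; auto; rewrite IHn; ring. } rewrite Z; ring.
    intros; apply H2; lia.
  - rewrite IHN by (intros; try apply H2; lia). rewrite (H2 N) by lia. ring. Qed.
Lemma prodR_abs_le N f B : 0 <= B -> (forall r, (r < N)%nat -> Rabs (f r) <= B) -> Rabs (prodR N f) <= B ^ N.
Proof. induction N; simpl; intros HB H. rewrite Rabs_R1; lra.
  rewrite Rabs_mult. rewrite Rmult_comm. apply Rmult_le_compat; try apply Rabs_pos.
  apply H; lia. apply IHN; auto. Qed.
Lemma prodR_abs_le1 N f B r0 : 0 <= B -> (r0 < N)%nat -> (forall r, (r < N)%nat -> Rabs (f r) <= B) ->
  Rabs (prodR N f) <= Rabs (f r0) * B ^ (N - 1).
Proof. induction N; simpl; intros HB Hr H. lia.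
  rewrite Rabs_mult. destruct (Nat.eq_dec r0 N).
  - subst. replace (N - 0)%nat with N by lia. rewrite Rmult_comm. apply Rmult_le_compat_l. apply Rabs_pos.
    apply prodR_abs_le; auto.
  - replace (N - 0)%nat with (S (N - 1)) by lia. simpl.
    rewrite (Rmult_comm B), <- Rmult_assoc. apply Rmult_le_compat; try apply Rabs_pos.
    apply IHN; auto; lia. apply H; lia. Qed.
Lemma prodR_zero N f r0 : (r0 < N)%nat -> f r0 = 0 -> prodR N f = 0.
Proof. induction N; simpl; intros H1 H2. lia. destruct (Nat.eq_dec r0 N). subst. rewrite H2; ring.
  rewrite IHN by (auto; lia). ring. Qed.
Lemma prodR_one N f : (forall r, (r < N)%nat -> f r = 1) -> prodR N f = 1.
Proof. induction N; simpl; intros H; auto. rewrite IHN, H by (auto; lia). ring. Qed.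

Lemma isd_eq (f : R -> R) t l l' : is_derive f t l -> l = l' -> is_derive f t l'.
Proof. intros H ->; auto. Qed.
Lemma isd_plus (f g : R -> R) t a b : is_derive f t a -> is_derive g t b -> is_derive (fun y => f y + g y) t (a + b).
Proof. intros. exact (is_derive_plus f g t a b H H0). Qed.
Lemma isd_minus (f g : R -> R) t a b : is_derive f t a -> is_derive g t b -> is_derive (fun y => f y - g y) t (a - b).
Proof. intros. exact (is_derive_minus f g t a b H H0). Qed.
Lemma isd_mult (f g : R -> R) t a b : is_derive f t a -> is_derive g t b -> is_derive (fun y => f y * g y) t (a * g t + f t * b).
Proof. intros. exact (is_derive_mult f g t a b H H0 Rmult_comm). Qed.
Lemma isd_scal (f : R -> R) c t a : is_derive f t a -> is_derive (fun y => c * f y) t (c * a).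
Proof. intros. exact (is_derive_scal f t c a H). Qed.
Lemma isd_const (c t : R) : is_derive (fun _ => c) t 0.
Proof. exact (is_derive_const c t). Qed.
Lemma isd_id (t : R) : is_derive (fun y => y) t 1.
Proof. exact (is_derive_id t). Qed.

Definition TP (f : R -> R) (n : nat) (y x : R) : R :=
  sumR (S n) (fun p => Derive_n f p y * (x - y) ^ p / INR (fact p)).

Lemma TP_self f n x : TP f n x x = f x.
Proof. unfold TP. induction n. simpl. field.
  change (sumR (S (S n)) (fun p => Derive_n f p x * (x - x) ^ p / INR (fact p)))
   with (sumR (S n) (fun p => Derive_n f p x * (x - x) ^ p / INR (fact p)) + Derive_n f (S n) x * (x - x) ^ (S n) / INR (fact (S n))).
  rewrite IHn. replace (x - x) with 0 by ring. rewrite pow_i by lia. field. apply not_0_INR. apply fact_neq_0. Qed.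

Lemma TP_deriv (f : R -> R) (n : nat) (x t : R) : (forall p, (p <= S n)%nat -> ex_derive_n f p t) ->
  is_derive (fun y => TP f n y x) t (Derive_n f (S n) t * (x - t) ^ n / INR (fact n)).
Proof. unfold TP. induction n; intros H.
  - replace (Derive_n f 1 t * (x-t)^0 / INR (fact 0)) with (Derive f t) by (change (Derive_n f 1 t) with (Derive f t); change (INR (fact 0)) with 1; rewrite pow_O; field).
    apply (is_derive_ext f). intros; simpl; field. apply Derive_correct; exact (H 1%nat (le_n _)).
  - change (fun y => sumR (S (S n)) (fun p => Derive_n f p y * (x - y) ^ p / INR (fact p)))
     with (fun y => sumR (S n) (fun p => Derive_n f p y * (x - y) ^ p / INR (fact p)) + Derive_n f (S n) y * (x - y) ^ (S n) / INR (fact (S n))).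
    assert (H1 : is_derive (fun y => sumR (S n) (fun p => Derive_n f p y * (x - y) ^ p / INR (fact p))) t
       (Derive_n f (S n) t * (x - t) ^ n / INR (fact n))) by (apply IHn; intros; apply H; lia).
    assert (H2 : is_derive (Derive_n f (S n)) t (Derive_n f (S (S n)) t)).
    { apply Derive_correct. exact (H (S (S n)) (le_n _)). }
    assert (H3 : is_derive (fun y => (x - y) ^ S n) t (INR (S n) * (-1) * (x - t) ^ n)).
    { apply (is_derive_pow (fun y => x - y) (S n) t (-1)). auto_derive; auto; ring. }
    assert (H4 := isd_mult _ _ t _ _ H2 H3).
    assert (H5 := isd_scal _ (/ INR (fact (S n))) t _ H4).
    eapply isd_eq. apply (is_derive_ext (fun y => sumR (S n) (fun p => Derive_n f p y * (x - y) ^ p / INR (fact p)) + / INR (fact (S n)) * (Derive_n f (S n) y * (x - y) ^ S n))).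
    intros; simpl; unfold Rdiv; ring.
    apply isd_plus; [exact H1| exact H5].
    rewrite fact_simpl, mult_INR. rewrite S_INR. simpl pow.
    assert (INR (fact n) <> 0) by (apply not_0_INR, fact_neq_0).
    match goal with |- ?a = ?b => change (@eq R a b) end. field. split; auto. pose proof (pos_INR n). lra.
Qed.

Ltac req := match goal with |- ?a = ?b => change (@eq R a b) end.

Lemma isd_cont (f : R -> R) (x l : R) : is_derive f x l -> continuity_pt f x.
Proof. intros H. apply continuity_pt_filterlim. apply (ex_derive_continuous (K:=R_AbsRing) (V:=R_NormedModule)). exists l; exact H. Qed.

Lemma fact_ge1 n : 1 <= INR (fact n).
Proof. apply (le_INR 1). apply lt_O_fact. Qed.

Lemma taylor_bound (f : R -> R) (n : nat) (x y K : R) :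
  (forall t, Rmin x y <= t <= Rmax x y -> forall p, (p <= S n)%nat -> ex_derive_n f p t) ->
  (forall t, Rmin x y <= t <= Rmax x y -> Rabs (Derive_n f (S n) t) <= K) ->
  Rabs (f x - TP f n y x) <= K * Rabs (x - y) ^ (S n).
Proof.
  intros H1 H2.
  destruct (MVT_gen (fun z => TP f n z x) y x (fun t => Derive_n f (S n) t * (x - t) ^ n / INR (fact n))) as [c [Hc Hm]].
  - intros z Hz. apply TP_deriv. apply H1. rewrite Rmin_comm, Rmax_comm. lra.
  - intros z Hz. eapply isd_cont. apply TP_deriv. apply H1. rewrite Rmin_comm, Rmax_comm. lra.
  - simpl in Hm. rewrite TP_self in Hm. rewrite Hm.
    rewrite Rmin_comm, Rmax_comm in Hc.
    assert (HK := H2 c Hc).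
    assert (Hxc : Rabs (x - c) <= Rabs (x - y)).
    { unfold Rmin, Rmax in Hc. destruct (Rle_dec x y); unfold Rabs; repeat destruct Rcase_abs; lra. }
    unfold Rdiv. rewrite !Rabs_mult. rewrite Rabs_inv, (Rabs_right (INR _)) by (pose proof (fact_ge1 n); lra).
    rewrite <- RPow_abs. simpl pow.
    pose proof (fact_ge1 n).
    assert (0 < / INR (fact n) <= 1). { split. apply Rinv_0_lt_compat; lra. rewrite <- Rinv_1. apply Rinv_le_contravar; lra. }
    assert (Rabs (x - c) ^ n <= Rabs (x - y) ^ n) by (apply pow_incr; split; [apply Rabs_pos|auto]).
    assert (0 <= Rabs (x - c) ^ n) by (apply pow_le, Rabs_pos).
    assert (0 <= Rabs (x - y)) by apply Rabs_pos.
    assert (0 <= Rabs (Derive_n f (S n) c)) by apply Rabs_pos.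
    apply Rle_trans with (K * Rabs (x - y) ^ n * Rabs (x - y)); [|right; simpl; ring].
    apply Rmult_le_compat_r; auto.
    apply Rle_trans with (Rabs (Derive_n f (S n) c) * Rabs (x - c) ^ n). assert (0 <= Rabs (Derive_n f (S n) c) * Rabs (x - c) ^ n) by (apply Rmult_le_pos; auto). change (Derive (Derive_n f n) c) with (Derive_n f (S n) c). nra.
    apply Rmult_le_compat; auto.
Qed.


Definition Lb (m l : nat) (th : R) : R :=
  prodR (S m) (fun r => if Nat.eqb r l then 1 else (th - INR r) / (INR l - INR r)).

Lemma INR_neq_ge1 l r : l <> r -> 1 <= Rabs (INR l - INR r).
Proof. intros H. destruct (Nat.lt_gt_cases l r) as [[Hl|Hl] _]; auto.
  - assert (INR (S l) <= INR r) by (apply le_INR; lia). rewrite S_INR in H0.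
    rewrite Rabs_left1; lra.
  - assert (INR (S r) <= INR l) by (apply le_INR; lia). rewrite S_INR in H0.
    rewrite Rabs_right; lra. Qed.
Lemma INR_neq l r : l <> r -> INR l - INR r <> 0.
Proof. intros H E. pose proof (INR_neq_ge1 l r H). rewrite E, Rabs_R0 in H0. lra. Qed.

Lemma interp_Lb u dt m s x : dt <> 0 ->
  Defs.interp u dt m s x = sumR (S m) (fun l => u (node dt (s + l)) * Lb m l ((x - node dt s) / dt)).
Proof. intros Hdt. unfold Defs.interp, Lb. apply sumR_ext. intros l Hl. f_equal. apply prodR_ext.
  intros r Hr. destruct (Nat.eqb r l) eqn:E; auto. apply Nat.eqb_neq in E.
  unfold node. rewrite !plus_INR. assert (INR l - INR r <> 0) by (apply INR_neq; auto).
  field. repeat split; auto. intro C. apply H. apply (Rmult_eq_reg_r dt); auto. lra. Qed.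

Lemma repro m p th : (1 <= m <= 6)%nat -> (p <= m)%nat ->
  sumR (S m) (fun l => (INR l - INR m) ^ p * Lb m l th) = (th - INR m) ^ p.
Proof. intros Hm Hp.
  destruct m as [|[|[|[|[|[|[|m]]]]]]]; try lia;
  destruct p as [|[|[|[|[|[|[|p]]]]]]]; try lia; unfold Lb; simpl; field.
Qed.

Lemma Lb_node m l l' : (l <= m)%nat -> (l' <= m)%nat -> Lb m l (INR l') = if Nat.eqb l l' then 1 else 0.
Proof. intros Hl Hl'. unfold Lb. destruct (Nat.eqb l l') eqn:E.
  - apply Nat.eqb_eq in E; subst. apply prodR_one. intros r Hr. destruct (Nat.eqb r l') eqn:E; auto.
    apply Nat.eqb_neq in E. field. apply INR_neq; auto.
  - apply Nat.eqb_neq in E. apply (prodR_zero _ _ l'). lia.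
    destruct (Nat.eqb l' l) eqn:E2. apply Nat.eqb_eq in E2; lia. unfold Rdiv; ring. Qed.

Lemma node_add dt a b : node dt (a + b) = node dt a + INR b * dt.
Proof. unfold node; rewrite plus_INR; ring. Qed.

Lemma interp_node u dt m s l' : dt <> 0 -> (l' <= m)%nat ->
  Defs.interp u dt m s (node dt (s + l')) = u (node dt (s + l')).
Proof. intros Hdt Hl. rewrite interp_Lb by auto.
  replace ((node dt (s + l') - node dt s) / dt) with (INR l') by (rewrite node_add; field; auto).
  rewrite (sumR_single _ _ l'); [| lia | ].
  2:{ intros l H1 H2; rewrite Lb_node by lia;
     destruct (Nat.eqb l l') eqn:E; [apply Nat.eqb_eq in E; lia| ring]. }
  rewrite Lb_node by lia. rewrite Nat.eqb_refl. ring. Qed.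

Lemma sumR_mult_r N f c : sumR N f * c = sumR N (fun l => f l * c).
Proof. induction N; simpl; [ring| rewrite <- IHN; ring]. Qed.

Lemma interp_TP u dt m s x : (1 <= m <= 6)%nat -> dt <> 0 ->
  sumR (S m) (fun l => TP u m (node dt (s + m)) (node dt (s + l)) * Lb m l ((x - node dt s) / dt))
  = TP u m (node dt (s + m)) x.
Proof. intros Hm Hdt. unfold TP.
  rewrite (sumR_ext _ _ (fun l => sumR (S m) (fun p =>
      Derive_n u p (node dt (s + m)) * (node dt (s + l) - node dt (s + m)) ^ p / INR (fact p)
      * Lb m l ((x - node dt s) / dt)))) by (intros; apply sumR_mult_r).
  rewrite sumR_swap. apply sumR_ext. intros p Hp.
  rewrite (sumR_ext _ _ (fun l => (Derive_n u p (node dt (s + m)) * dt ^ p / INR (fact p)) *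
     ((INR l - INR m) ^ p * Lb m l ((x - node dt s) / dt)))).
  rewrite sumR_scal. rewrite repro by lia.
  replace (x - node dt (s + m)) with (((x - node dt s) / dt - INR m) * dt) by (rewrite node_add; field; auto).
  rewrite Rpow_mult_distr. field. apply not_0_INR, fact_neq_0.
  intros l Hl. rewrite !node_add. replace (node dt s + INR l * dt - (node dt s + INR m * dt)) with ((INR l - INR m) * dt) by ring.
  rewrite Rpow_mult_distr. field. apply not_0_INR, fact_neq_0. Qed.

Definition CC (m : nat) : R := (INR m + 1) * INR m ^ (2 * m + 1) + INR m ^ m.

Lemma node_le dt a b : 0 <= dt -> (a <= b)%nat -> node dt a <= node dt b.
Proof. intros. unfold node. apply Rmult_le_compat_r; auto. apply le_INR; auto. Qed.

Lemma interp_err u dt m s x K : (1 <= m <= 6)%nat -> 0 < dt ->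
  node dt s <= x <= node dt (s + m) ->
  (forall t, node dt s <= t <= node dt (s + m) -> forall p, (p <= S m)%nat -> ex_derive_n u p t) ->
  (forall t, node dt s <= t <= node dt (s + m) -> Rabs (Derive_n u (S m) t) <= K) ->
  Rabs (Defs.interp u dt m s x - u x) <= CC m * K * dt ^ m * (node dt (s + m) - x).
Proof.
  intros Hm Hdt Hx Hd HK.
  set (b := node dt (s + m)) in *.
  set (th := (x - node dt s) / dt).
  set (R0 := fun y => u y - TP u m b y).
  assert (Hb : b = node dt s + INR m * dt) by (apply node_add).
  assert (HK0 : 0 <= K) by (eapply Rle_trans; [apply Rabs_pos| apply (HK x Hx)]).
  assert (Hm1 : 1 <= INR m) by (apply (le_INR 1); lia).
  assert (Hth : 0 <= th <= INR m).
  { unfold th. split. apply Rmult_le_pos; [lra| left; apply Rinv_0_lt_compat; auto].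
    apply (Rmult_le_reg_r dt); auto. unfold Rdiv. rewrite Rmult_assoc, Rinv_l by lra. lra. }
  assert (Hbx : b - x = (INR m - th) * dt) by (unfold th; rewrite Hb; field; lra).
  assert (HR : forall y, node dt s <= y <= b -> Rabs (R0 y) <= K * (b - y) ^ (S m)).
  { intros y Hy. unfold R0. eapply Rle_trans. apply taylor_bound with (K := K).
    - intros t Ht p Hp. apply Hd; auto. unfold Rmin, Rmax in Ht. destruct (Rle_dec y b); lra.
    - intros t Ht. apply HK. unfold Rmin, Rmax in Ht. destruct (Rle_dec y b); lra.
    - rewrite Rabs_minus_sym, Rabs_right by lra. lra. }
  assert (Hdec : Defs.interp u dt m s x - u x =
      sumR (S m) (fun l => R0 (node dt (s + l)) * Lb m l th) - R0 x).
  { rewrite interp_Lb by lra. fold th. unfold R0.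
    rewrite (sumR_ext _ _ (fun l => (u (node dt (s + l)) - TP u m b (node dt (s + l))) * Lb m l th
        + TP u m b (node dt (s + l)) * Lb m l th)) by (intros; cbv beta; ring).
    rewrite sumR_plus. unfold b, th. rewrite interp_TP by (auto; lra). ring. }
  rewrite Hdec.
  assert (Hterm : forall l, (l < S m)%nat ->
     Rabs (R0 (node dt (s + l)) * Lb m l th) <= K * INR m ^ (2 * m + 1) * dt ^ m * (b - x)).
  { intros l Hl.
    assert (0 <= K * INR m ^ (2 * m + 1) * dt ^ m * (b - x)).
    { repeat apply Rmult_le_pos; try lra. apply pow_le; lra. apply pow_le; lra. }
    destruct (Nat.eq_dec l m) as [->|Hlm].
    - unfold R0. fold b. rewrite TP_self. rewrite Rminus_diag, Rmult_0_l, Rabs_R0. auto.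
    - rewrite Rabs_mult.
      assert (H1 : Rabs (R0 (node dt (s + l))) <= K * (INR m * dt) ^ (S m)).
      { eapply Rle_trans. apply HR. rewrite node_add. split.
        pose proof (pos_INR l); nra. rewrite Hb. apply Rplus_le_compat_l.
        apply Rmult_le_compat_r; try lra. apply le_INR; lia.
        apply Rmult_le_compat_l; auto. apply pow_incr. rewrite Hb, node_add. split.
        assert (INR l <= INR m) by (apply le_INR; lia). nra.
        pose proof (pos_INR l). nra. }
      assert (H2 : Rabs (Lb m l th) <= (INR m - th) * INR m ^ m).
      { unfold Lb. eapply Rle_trans. apply (prodR_abs_le1 _ _ (INR m) m); try lra; try lia.
        - intros r Hr. destruct (Nat.eqb r l). rewrite Rabs_R1; lra.
          destruct (Nat.eq_dec r l) as [->|Hrl]. 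
          + rewrite Rminus_diag. unfold Rdiv. rewrite Rinv_0, Rmult_0_r, Rabs_R0. lra.
          + unfold Rdiv. rewrite Rabs_mult, Rabs_inv.
            pose proof (INR_neq_ge1 l r (fun e => Hrl (eq_sym e))).
            assert (Rabs (th - INR r) <= INR m).
            { assert (INR r <= INR m) by (apply le_INR; lia). pose proof (pos_INR r).
              unfold Rabs; destruct Rcase_abs; lra. }
            apply Rle_trans with (Rabs (th - INR r) * 1). apply Rmult_le_compat_l. apply Rabs_pos.
            rewrite <- Rinv_1. apply Rinv_le_contravar; lra. lra.
        - replace (S m - 1)%nat with m by lia. apply Rmult_le_compat_r. apply pow_le; lra.
          destruct (Nat.eqb m l) eqn:E. apply Nat.eqb_eq in E; lia.
          unfold Rdiv. rewrite Rabs_mult, Rabs_inv.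
          pose proof (INR_neq_ge1 l m Hlm).
          rewrite Rabs_minus_sym, Rabs_right by lra.
          apply Rle_trans with ((INR m - th) * 1). apply Rmult_le_compat_l. lra.
          rewrite <- Rinv_1. apply Rinv_le_contravar; lra. lra. }
      eapply Rle_trans. apply Rmult_le_compat; try apply Rabs_pos; eauto.
      rewrite Hbx. rewrite Rpow_mult_distr.
      replace (2 * m + 1)%nat with (S m + m)%nat by lia. rewrite pow_add. simpl pow. right. ring. }
  eapply Rle_trans. apply Rabs_triang. rewrite Rabs_Ropp.
  eapply Rle_trans. apply Rplus_le_compat. apply sumR_abs_le. exact Hterm. apply (HR x). lra.
  rewrite S_INR. unfold CC.
  assert (0 <= b - x) by lra.
  assert ((b - x) ^ m <= (INR m * dt) ^ m) by (apply pow_incr; nra).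
  assert (0 <= (b - x) ^ m) by (apply pow_le; lra).
  replace (K * (b - x) ^ S m) with (K * (b - x) ^ m * (b - x)) by (simpl; ring).
  assert (K * (b - x) ^ m * (b - x) <= K * (INR m * dt) ^ m * (b - x)).
  { apply Rmult_le_compat_r; auto. apply Rmult_le_compat_l; auto. }
  rewrite Rpow_mult_distr in H2. lra.
Qed.


Lemma ct_mult (f g : R -> R) x : continuous f x -> continuous g x -> continuous (fun y => f y * g y) x.
Proof. intros. exact (continuous_mult (U:=R_UniformSpace) (K:=R_AbsRing) f g x H H0). Qed.
Lemma ct_plus (f g : R -> R) x : continuous f x -> continuous g x -> continuous (fun y => f y + g y) x.
Proof. intros. exact (continuous_plus (U:=R_UniformSpace) (K:=R_AbsRing) (V:=R_NormedModule) f g x H H0). Qed.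
Lemma ct_minus (f g : R -> R) x : continuous f x -> continuous g x -> continuous (fun y => f y - g y) x.
Proof. intros. exact (continuous_minus (U:=R_UniformSpace) (K:=R_AbsRing) (V:=R_NormedModule) f g x H H0). Qed.
Lemma ct_const (c x : R) : continuous (fun _ : R => c) x.
Proof. exact (continuous_const (U:=R_UniformSpace) (V:=R_UniformSpace) c x). Qed.
Lemma ct_deriv (f : R -> R) x l : is_derive f x l -> continuous f x.
Proof. intros H. apply (ex_derive_continuous (K:=R_AbsRing) (V:=R_NormedModule)). exists l; exact H. Qed.
Lemma ir_plus (f g : R -> R) a b If Ig : is_RInt f a b If -> is_RInt g a b Ig -> is_RInt (fun y => f y + g y) a b (If + Ig).
Proof. intros. exact (is_RInt_plus (V:=R_NormedModule) f g a b If Ig H H0). Qed.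
Lemma ir_minus (f g : R -> R) a b If Ig : is_RInt f a b If -> is_RInt g a b Ig -> is_RInt (fun y => f y - g y) a b (If - Ig).
Proof. intros. exact (is_RInt_minus (V:=R_NormedModule) f g a b If Ig H H0). Qed.
Lemma ir_scal (f : R -> R) c a b If : is_RInt f a b If -> is_RInt (fun y => c * f y) a b (c * If).
Proof. intros. exact (is_RInt_scal (V:=R_NormedModule) f a b c If H). Qed.
Lemma ir_ext (f g : R -> R) a b I : (forall x, Rmin a b < x < Rmax a b -> f x = g x) -> is_RInt f a b I -> is_RInt g a b I.
Proof. intros. exact (is_RInt_ext (V:=R_NormedModule) f g a b I H H0). Qed.
Lemma ir_eq (f : R -> R) a b I I' : is_RInt f a b I -> I = I' -> is_RInt f a b I'.
Proof. intros H ->; auto. Qed.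
Lemma ir_const (c a b : R) : is_RInt (fun _ => c) a b ((b - a) * c).
Proof. exact (is_RInt_const (V:=R_NormedModule) a b c). Qed.
Lemma ir_cont (f : R -> R) a b : a <= b -> (forall x, a <= x <= b -> continuous f x) -> is_RInt f a b (RInt f a b).
Proof. intros Hab H. apply (RInt_correct (V:=R_CompleteNormedModule)). apply (ex_RInt_continuous (V:=R_CompleteNormedModule)).
  intros z Hz. rewrite Rmin_left, Rmax_right in Hz by auto. apply H; auto. Qed.
Lemma ir_deriv (f df : R -> R) a b : a <= b -> (forall x, a <= x <= b -> is_derive f x (df x)) ->
  (forall x, a <= x <= b -> continuous df x) -> is_RInt df a b (f b - f a).
Proof. intros Hab H1 H2. apply (is_RInt_derive (V:=R_CompleteNormedModule)).
  intros; apply H1; rewrite Rmin_left, Rmax_right in H by auto; auto.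
  intros; apply H2; rewrite Rmin_left, Rmax_right in H by auto; auto. Qed.
Lemma ir_le (f g : R -> R) a b If Ig : a <= b -> is_RInt f a b If -> is_RInt g a b Ig ->
  (forall x, a < x < b -> f x <= g x) -> If <= Ig.
Proof. intros. eapply is_RInt_le; eauto. Qed.
Lemma ir_abs_le (f g : R -> R) a b If Ig : a <= b -> is_RInt f a b If -> is_RInt g a b Ig ->
  (forall x, a < x < b -> Rabs (f x) <= g x) -> Rabs If <= Ig.
Proof. intros Hab H1 H2 H3. apply Rabs_le. split.
  - assert (- Ig <= If); [|lra]. apply (ir_le (fun x => -1 * g x) f a b); auto.
    replace (- Ig) with (-1 * Ig) by ring. apply ir_scal; auto.
    intros x Hx. specialize (H3 x Hx). apply Rabs_le_between in H3. lra.
  - eapply ir_le; eauto. intros x Hx. specialize (H3 x Hx). apply Rabs_le_between in H3. lra. Qed.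

Definition C1 (f : R -> R) := exists df : R -> R, (forall x, is_derive f x (df x)) /\ (forall x, continuous df x).
Lemma C1_D f : C1 f -> (forall x, is_derive f x (Derive f x)) /\ (forall x, continuous (Derive f) x).
Proof. intros [df [H1 H2]]. assert (E : forall x, Derive f x = df x) by (intros; apply is_derive_unique; auto).
  split. intros x; rewrite E; auto. intros x. apply (continuous_ext df). intros; rewrite E; auto. auto. Qed.
Lemma C1_const c : C1 (fun _ => c).
Proof. exists (fun _ => 0). split. intros; apply isd_const. intros; apply ct_const. Qed.
Lemma C1_aff a c : C1 (fun x => (x - a) / c).
Proof. exists (fun _ => / c). split. intros. eapply isd_eq. unfold Rdiv.
  apply (is_derive_ext (fun y => / c * (y - a))). intros; cbv beta; req; unfold Rdiv; ring. apply isd_scal. apply isd_minus. apply isd_id. apply isd_const.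
  req; ring. intros; apply ct_const. Qed.
Lemma C1_mult f g : C1 f -> C1 g -> C1 (fun x => f x * g x).
Proof. intros [df [H1 H2]] [dg [H3 H4]]. exists (fun x => df x * g x + f x * dg x). split.
  intros; apply isd_mult; auto. intros. apply ct_plus; apply ct_mult; auto; eapply ct_deriv; eauto. Qed.
Lemma C1_plus f g : C1 f -> C1 g -> C1 (fun x => f x + g x).
Proof. intros [df [H1 H2]] [dg [H3 H4]]. exists (fun x => df x + dg x). split.
  intros; apply isd_plus; auto. intros. apply ct_plus; auto. Qed.
Lemma C1_ext f g : (forall x, f x = g x) -> C1 f -> C1 g.
Proof. intros E [df [H1 H2]]. exists df; split; auto. intros; eapply is_derive_ext; eauto. Qed.
Lemma C1_sumR N (F : nat -> R -> R) : (forall l, C1 (F l)) -> C1 (fun x => sumR N (fun l => F l x)).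
Proof. intros H. induction N. simpl. apply C1_const. simpl. apply (C1_plus _ (F N)); auto. Qed.
Lemma C1_prodR N (F : nat -> R -> R) : (forall l, C1 (F l)) -> C1 (fun x => prodR N (fun l => F l x)).
Proof. intros H. induction N. simpl. apply C1_const. simpl. apply (C1_mult _ (F N)); auto. Qed.
Lemma C1_interp u dt m s : C1 (Defs.interp u dt m s).
Proof. unfold Defs.interp. apply (C1_sumR _ (fun l x => u (node dt (s + l)) * prodR (S m) (fun r => if Nat.eqb r l then 1 else (x - node dt (s + r)) / (node dt (s + l) - node dt (s + r))))).
  intros l. apply C1_mult. apply C1_const.
  apply (C1_prodR _ (fun r x => if Nat.eqb r l then 1 else (x - node dt (s + r)) / (node dt (s + l) - node dt (s + r)))).
  intros r. destruct (Nat.eqb r l). apply C1_const. apply C1_aff. Qed.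

Ltac rg := cbv beta; try (match goal with |- ?a = ?b => change (@eq R a b) end); ring.
Ltac fld := cbv beta; try (match goal with |- ?a = ?b => change (@eq R a b) end); field.
Lemma isd_rpow t q x : x < t -> is_derive (fun y => Rpower (t - y) q) x (- (q * Rpower (t - x) (q - 1))).
Proof. intros H.
  assert (H1 : is_derive (fun z => Rpower z q) (t - x) (q * Rpower (t - x) (q - 1))).
  { apply is_derive_Reals. apply derivable_pt_lim_power. lra. }
  assert (H2 : is_derive (fun y => t - y) x (-1)).
  { eapply isd_eq. apply isd_minus. apply isd_const. apply isd_id. rg. }
  eapply isd_eq. apply (is_derive_comp (fun z => Rpower z q) (fun y => t - y) x _ _ H1 H2).
  simpl. unfold scal; simpl; unfold mult; simpl. rg. Qed.
Lemma ct_rpow t q x : x < t -> continuous (fun y => Rpower (t - y) q) x.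
Proof. intros H. eapply ct_deriv. apply isd_rpow; auto. Qed.
Lemma rpow_pos x q : 0 < x -> 0 < Rpower x q.
Proof. intros. unfold Rpower. apply exp_pos. Qed.
Lemma rpow_decr x y q : q <= 0 -> 0 < x <= y -> Rpower y q <= Rpower x q.
Proof. intros Hq Hxy. unfold Rpower.
  assert (forall a b, a <= b -> exp a <= exp b) as exp_le_exp.
  { intros a b [Hab|Hab]. left; apply exp_increasing; auto. subst; lra. }
  apply exp_le_exp.
  assert (ln x <= ln y) by (destruct Hxy as [H1 [H2|H2]]; [left; apply ln_increasing; lra| subst; lra]). nra. Qed.
Lemma rpow_incr x y q : 0 <= q -> 0 < x <= y -> Rpower x q <= Rpower y q.
Proof. intros. apply Rle_Rpower_l; auto. Qed.

Lemma ibp (e de : R -> R) a c t al : a < c < t ->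
  (forall x, a <= x <= c -> is_derive e x (de x)) -> (forall x, a <= x <= c -> continuous de x) ->
  exists V1, is_RInt (fun x => al * Rpower (t - x) (-al - 1) * e x) a c V1 /\
    is_RInt (fun x => Rpower (t - x) (-al) * de x) a c (Rpower (t - c) (-al) * e c - Rpower (t - a) (-al) * e a - V1).
Proof. intros Hac Hd Hc.
  assert (Hg : forall x, a <= x <= c -> continuous (fun x => al * Rpower (t - x) (-al - 1) * e x) x).
  { intros x Hx. apply ct_mult. apply ct_mult. apply ct_const. apply ct_rpow; lra. eapply ct_deriv; eauto. }
  exists (RInt (fun x => al * Rpower (t - x) (-al - 1) * e x) a c). split.
  apply ir_cont; auto; lra.
  assert (HF : is_RInt (fun x => al * Rpower (t - x) (-al - 1) * e x + Rpower (t - x) (-al) * de x) a c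
       (Rpower (t - c) (-al) * e c - Rpower (t - a) (-al) * e a)).
  { apply (ir_deriv (fun x => Rpower (t - x) (-al) * e x)). lra.
    - intros x Hx. eapply isd_eq. apply isd_mult. apply isd_rpow; lra. apply Hd; auto. rg.
    - intros x Hx. apply ct_plus. apply Hg; auto. apply ct_mult. apply ct_rpow; lra. apply Hc; auto. }
  eapply ir_ext; [|apply (ir_minus _ _ _ _ _ _ HF (ir_cont _ a c (ltac:(lra)) Hg))].
  intros; simpl; rg. Qed.


Lemma ir_w t al u v : u <= v < t -> al < 1 ->
  is_RInt (fun x => Rpower (t - x) (-al)) u v ((Rpower (t - u) (1 - al) - Rpower (t - v) (1 - al)) / (1 - al)).
Proof. intros H Hal.
  eapply ir_eq. apply (ir_deriv (fun x => - / (1 - al) * Rpower (t - x) (1 - al))). lra.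
  - intros x Hx. eapply isd_eq. apply isd_scal. apply isd_rpow. lra.
    replace (1 - al - 1) with (- al) by rg. fld. lra.
  - intros x Hx. apply ct_rpow. lra.
  - fld. lra. Qed.

Lemma ir_w1 t al u v : u <= v < t ->
  is_RInt (fun x => al * Rpower (t - x) (-al - 1)) u v (Rpower (t - v) (-al) - Rpower (t - u) (-al)).
Proof. intros H.
  apply (ir_deriv (fun x => Rpower (t - x) (-al))). lra.
  - intros x Hx. eapply isd_eq. apply isd_rpow. lra. rg.
  - intros x Hx. apply ct_mult. apply ct_const. apply ct_rpow. lra. Qed.

Lemma ball_R (x y : R) (e : R) : Rabs (y - x) < e -> ball x e y.
Proof. intros H. exact H. Qed.

Lemma gen_exists (f : R -> R) t c G al : 0 < al < 1 -> 0 <= c < t -> 0 <= G ->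
  (forall b, c < b < t -> ex_RInt f 0 b) ->
  (forall x, c < x < t -> Rabs (f x) <= G * Rpower (t - x) (-al)) ->
  exists l, is_RInt_gen f (at_point 0) (at_left t) l.
Proof.
  intros Hal Hc HG Hex Hb.
  set (F := fun b => RInt f 0 b).
  assert (HL : exists l, filterlim F (at_left t) (locally l)).
  { apply (proj1 (Hierarchy.filterlim_locally_cauchy (U := R_CompleteSpace) (F := at_left t) F)).
    intros eps.
    set (d := Rpower (eps * (1 - al) / (G + 1)) (/ (1 - al))).
    assert (Hd0 : 0 < eps * (1 - al) / (G + 1)).
    { apply Rdiv_lt_0_compat. apply Rmult_lt_0_compat. apply cond_pos. lra. lra. }
    assert (Hd : 0 < d) by (apply rpow_pos; auto).
    assert (Hdd : Rpower d (1 - al) = eps * (1 - al) / (G + 1)).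
    { unfold d. rewrite Rpower_mult. replace (/ (1 - al) * (1 - al)) with 1 by (field; lra).
      apply Rpower_1; auto. }
    assert (Key : forall u v, c < u <= v -> v < t -> t - u < d -> Rabs (F v - F u) < eps).
    { intros u v Huv Hvt Hud.
      assert (E1 : ex_RInt f 0 v) by (apply Hex; lra).
      assert (E2 : ex_RInt f u v) by (apply (ex_RInt_Chasles_2 (V:=R_CompleteNormedModule) f 0 u v); auto; lra).
      assert (E3 : ex_RInt f 0 u) by (apply Hex; lra).
      assert (F v - F u = RInt f u v).
      { unfold F. rewrite <- (RInt_Chasles (V:=R_CompleteNormedModule) f 0 u v E3 E2). simpl. unfold plus; simpl. rg. }
      rewrite H.
      eapply Rle_lt_trans. apply (ir_abs_le f (fun x => G * Rpower (t - x) (-al)) u v). lra. apply (RInt_correct (V:=R_CompleteNormedModule)); exact E2.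
      apply ir_scal with (c := G). apply ir_w. lra. lra.
      intros x Hx. apply Hb. lra.
      assert (0 < Rpower (t - v) (1 - al)) by (apply rpow_pos; lra).
      assert (Rpower (t - u) (1 - al) < Rpower d (1 - al)) by (apply Rlt_Rpower_l; lra).
      rewrite Hdd in H1.
      apply Rle_lt_trans with (G * (Rpower (t - u) (1 - al) / (1 - al))).
      apply Rmult_le_compat_l; auto. unfold Rdiv. apply Rmult_le_compat_r. left; apply Rinv_0_lt_compat; lra. lra.
      apply Rle_lt_trans with (G * (eps * (1 - al) / (G + 1) / (1 - al))).
      apply Rmult_le_compat_l; auto. unfold Rdiv. apply Rmult_le_compat_r. left; apply Rinv_0_lt_compat; lra. lra.
      replace (G * (eps * (1 - al) / (G + 1) / (1 - al))) with (eps * (G / (G + 1))) by (field; lra).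
      pose proof (cond_pos eps). assert (G / (G + 1) < 1). { apply (Rmult_lt_reg_r (G + 1)). lra. unfold Rdiv. rewrite Rmult_assoc, Rinv_l by lra. lra. }
      nra. }
    exists (fun b => Rmax c (t - d) < b < t).
    split.
    - exists (mkposreal _ (ltac:(apply (Rlt_le_trans _ (Rmin (t - c) d)); [apply Rmin_pos; lra| apply Rle_refl]) : 0 < Rmin (t - c) d)).
      intros y Hy Hyt. simpl in Hy. unfold ball in Hy; simpl in Hy; unfold AbsRing_ball, abs, minus, plus, opp in Hy; simpl in Hy.
      apply Rabs_lt_between in Hy. pose proof (Rmin_l (t - c) d). pose proof (Rmin_r (t - c) d).
      unfold Rmax; destruct Rle_dec; lra.
    - intros u v Hu Hv. apply ball_R. pose proof (Rmax_l c (t - d)). pose proof (Rmax_r c (t - d)).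
      destruct (Rle_dec u v).
      + apply Key; lra.
      + rewrite Rabs_minus_sym. apply Key; lra. }
  destruct HL as [l Hl]. exists l.
  intros P HP. specialize (Hl P HP).
  assert (Hc' : at_left t (fun b => c < b)).
  { exists (mkposreal (t - c) (ltac:(lra))). intros y Hy Hyt. simpl in Hy.
    unfold ball in Hy; simpl in Hy; unfold AbsRing_ball, abs, minus, plus, opp in Hy; simpl in Hy.
    apply Rabs_lt_between in Hy. lra. }
  assert (Ht' : at_left t (fun b => b < t)).
  { exists (mkposreal 1 Rlt_0_1). intros y Hy Hyt. auto. }
  apply (Filter_prod _ _ _ (fun a => a = 0) (fun b => (c < b /\ b < t) /\ P (F b))).
  - reflexivity.
  - apply filter_and; [apply filter_and|]; auto.
  - intros a b -> [[Hcb Hbt] HPb]. simpl. exists (F b). split; auto.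
    apply (RInt_correct (V:=R_CompleteNormedModule)). apply Hex; lra.
Qed.

Lemma gen_bound (h : R -> R) t c l Bd : c < t -> is_RInt_gen h (at_point 0) (at_left t) l ->
  (forall b, c < b < t -> exists v, is_RInt h 0 b v /\ Rabs v <= Bd) -> Rabs l <= Bd.
Proof.
  intros Hct Hg Hb. apply Rnot_lt_le. intros Hlt.
  set (eps := (Rabs l - Bd) / 2).
  assert (Heps : 0 < eps) by (unfold eps; lra).
  assert (HP : locally l (fun y => Rabs (y - l) < eps)).
  { exists (mkposreal eps Heps). intros y Hy. exact Hy. }
  specialize (Hg _ HP). destruct Hg as [Q R HQ HR Himp].
  destruct HR as [d Hd].
  set (b := (Rmax c (t - d) + t) / 2).
  assert (Hb1 : c < b < t) by (unfold b; pose proof (Rmax_l c (t-d)); pose proof (Rmax_r c (t - d)); pose proof (cond_pos d); unfold Rmax in *; destruct Rle_dec; lra).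
  assert (Hb2 : R b).
  { apply Hd. unfold ball; simpl; unfold AbsRing_ball, abs, minus, plus, opp; simpl.
    unfold b. pose proof (Rmax_l c (t-d)). pose proof (Rmax_r c (t - d)). pose proof (cond_pos d).
    apply Rabs_lt_between. assert (Rmax c (t - d) < t) by (apply Rmax_lub_lt; lra). split; lra. lra. }
  destruct (Himp 0 b HQ Hb2) as [y [Hy1 Hy2]]. simpl in Hy1.
  destruct (Hb b Hb1) as [v [Hv1 Hv2]].
  assert (y = v).
  { apply (is_RInt_unique (V:=R_CompleteNormedModule)) in Hy1. apply (is_RInt_unique (V:=R_CompleteNormedModule)) in Hv1. congruence. }
  subst y. assert (Rabs l <= Rabs v + Rabs (v - l)).
  { replace l with (v - (v - l)) at 1 by ring. eapply Rle_trans. apply Rabs_triang. rewrite Rabs_Ropp. lra. }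
  unfold eps in *. lra.
Qed.


Lemma cont_bound (f : R -> R) a b : a <= b -> (forall x, a <= x <= b -> continuous f x) ->
  exists K, 0 <= K /\ forall x, a <= x <= b -> Rabs (f x) <= K.
Proof. intros Hab H.
  destruct (continuity_ab_maj (fun x => Rabs (f x)) a b Hab) as [c [Hc1 Hc2]].
  - intros c Hc. apply continuity_pt_filterlim. apply continuous_Rabs_comp. apply H; auto.
  - exists (Rabs (f c)). split. apply Rabs_pos. auto. Qed.

Lemma node_lt dt a b : 0 < dt -> (a < b)%nat -> node dt a < node dt b.
Proof. intros. unfold node. apply Rmult_lt_compat_r; auto. apply lt_INR; auto. Qed.
Lemma node0 dt : node dt 0 = 0.
Proof. unfold node; simpl; ring. Qed.
Lemma node_sub dt a b : (b <= a)%nat -> node dt a - node dt b = node dt (a - b).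
Proof. intros. unfold node. rewrite minus_INR by auto. ring. Qed.

Lemma in_seg_true dt j y : 0 < dt -> (1 <= j)%nat -> node dt (j - 1) < y < node dt j -> in_seg dt j y = true.
Proof. intros Hdt Hj Hy. unfold in_seg. destruct (Rle_dec y (node dt j)); [|lra].
  destruct (Nat.eqb j 1) eqn:E.
  - apply Nat.eqb_eq in E; subst. simpl in Hy. destruct (Rle_dec (node dt 0) y); auto. lra.
  - destruct (Rlt_dec (node dt (j - 1)) y); auto; lra. Qed.

Lemma in_seg_false dt j j' y : 0 < dt -> (1 <= j)%nat -> (1 <= j')%nat -> j' <> j ->
  node dt (j - 1) < y < node dt j -> in_seg dt j' y = false.
Proof. intros Hdt Hj Hj' Hne Hy. unfold in_seg. destruct (Rle_dec y (node dt j')); auto.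
  destruct (Nat.lt_gt_cases j' j) as [[Hl|Hl] _]; auto.
  - assert (node dt j' <= node dt (j - 1)) by (apply node_le; lia || lra). lra.
  - destruct (Nat.eqb j' 1) eqn:E. apply Nat.eqb_eq in E; lia.
    destruct (Rlt_dec (node dt (j' - 1)) y); auto.
    assert (node dt j <= node dt (j' - 1)) by (apply node_le; lia || lra). lra. Qed.

Lemma Pkin_loc u dt k i n j y : 0 < dt -> (1 <= j <= n)%nat -> node dt (j - 1) < y < node dt j ->
  Pkin u dt k i n y = piece u dt k i n j y.
Proof. intros Hdt Hj Hy. unfold Pkin.
  rewrite (sumR_single _ _ (j - 1)); [| lia |].
  - replace (S (j - 1)) with j by lia. rewrite in_seg_true by (auto; lia). auto.
  - intros l Hl Hne. rewrite (in_seg_false dt j (S l)) by (auto; lia). auto. Qed.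

Lemma Derive_Pkin u dt k i n j x : 0 < dt -> (1 <= j <= n)%nat -> node dt (j - 1) < x < node dt j ->
  Derive (Pkin u dt k i n) x = Derive (piece u dt k i n j) x.
Proof. intros Hdt Hj Hx. apply Derive_ext_loc.
  assert (He : 0 < Rmin (x - node dt (j - 1)) (node dt j - x)) by (apply Rmin_pos; lra).
  exists (mkposreal _ He). intros y Hy. simpl in Hy.
  unfold ball in Hy; simpl in Hy; unfold AbsRing_ball, abs, minus, plus, opp in Hy; simpl in Hy.
  apply Rabs_lt_between in Hy. pose proof (Rmin_l (x - node dt (j - 1)) (node dt j - x)).
  pose proof (Rmin_r (x - node dt (j - 1)) (node dt j - x)).
  apply Pkin_loc; auto. lra. Qed.

Lemma piece_form u dt k i n j : (1 <= i <= k)%nat -> (k <= n)%nat -> (1 <= j <= n)%nat ->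
  exists m s, (forall x, piece u dt k i n j x = Defs.interp u dt m s x) /\ (s + m <= n)%nat /\
    (s + 1 <= j)%nat /\ (j <= s + m)%nat /\
    ((j <= k - i /\ m = k - 1 /\ s = 0)%nat \/ (k - i < j /\ m = k)%nat) /\ (j = n -> m = k /\ s = n - k)%nat.
Proof. intros Hi Hk Hj. unfold piece, pmjq.
  destruct (Nat.leb j (k - i)) eqn:E1.
  - apply Nat.leb_le in E1. exists (k - 1)%nat, 0%nat. split.
    intros x. f_equal. lia. lia.
  - apply Nat.leb_gt in E1. destruct (Nat.leb j (n - i + 1)) eqn:E2.
    + apply Nat.leb_le in E2. exists k, (j + i - k - 1)%nat. split. auto. lia.
    + apply Nat.leb_gt in E2. exists k, (n - k)%nat. split. intros x; f_equal; lia. lia. Qed.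


Lemma seg u T al n dt k i m s a c : 0 < al < 1 -> 0 <= a -> a < c -> c < node dt n -> c <= T ->
  (forall x, 0 <= x <= T -> ex_derive_n u 1 x /\ ex_derive_n u 2 x) ->
  (forall x, a < x < c -> Derive (Pkin u dt k i n) x = Derive (Defs.interp u dt m s) x) ->
  exists xP xu V1,
   is_RInt (fun xi => Rpower (node dt n - xi) (-al) * Derive (Pkin u dt k i n) xi) a c xP /\
   is_RInt (fun xi => Rpower (node dt n - xi) (-al) * Derive u xi) a c xu /\
   is_RInt (fun x => al * Rpower (node dt n - x) (-al - 1) * (Defs.interp u dt m s x - u x)) a c V1 /\
   xP - xu = Rpower (node dt n - c) (-al) * (Defs.interp u dt m s c - u c)
             - Rpower (node dt n - a) (-al) * (Defs.interp u dt m s a - u a) - V1.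
Proof.
  intros Hal Ha Hac Hct HcT Hd HD.
  set (t := node dt n) in *.
  destruct (C1_D _ (C1_interp u dt m s)) as [Hpd Hpc].
  assert (Hud : forall x, a <= x <= c -> is_derive u x (Derive u x)).
  { intros x Hx. apply Derive_correct. destruct (Hd x ltac:(lra)) as [H1 _]. exact H1. }
  assert (Huc : forall x, a <= x <= c -> continuous (Derive u) x).
  { intros x Hx. destruct (Hd x ltac:(lra)) as [_ [l Hl]]. eapply ct_deriv. exact Hl. }
  destruct (ibp (fun x => Defs.interp u dt m s x - u x) (fun x => Derive (Defs.interp u dt m s) x - Derive u x) a c t al)
    as [V1 [HV1 Hw]].
  - lra.
  - intros x Hx. apply isd_minus; auto.
  - intros x Hx. apply ct_minus; auto.
  - assert (Hcu : forall x, a <= x <= c -> continuous (fun xi => Rpower (t - xi) (-al) * Derive u xi) x).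
    { intros x Hx. apply ct_mult. apply ct_rpow; lra. auto. }
    pose proof (ir_cont _ a c (ltac:(lra)) Hcu) as Hxu.
    eexists; eexists; exists V1. split; [|split; [exact Hxu|split; [exact HV1|]]].
    + eapply ir_ext; [|exact (ir_plus _ _ _ _ _ _ Hw Hxu)].
      intros x Hx. rewrite Rmin_left, Rmax_right in Hx by lra. cbv beta. rewrite (HD x Hx). ring.
    + ring.
Qed.

Lemma CC_pos m : 0 <= CC m.
Proof. unfold CC. assert (0 <= INR m) by apply pos_INR. apply Rplus_le_le_0_compat.
  apply Rmult_le_pos; try apply pow_le; lra. apply pow_le; lra. Qed.

Lemma err_unif u dt m s K x : (1 <= m <= 6)%nat -> 0 < dt -> 0 <= K ->
  node dt s <= x <= node dt (s + m) ->
  Rabs (Defs.interp u dt m s x - u x) <= CC m * K * dt ^ m * (node dt (s + m) - x) ->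
  Rabs (Defs.interp u dt m s x - u x) <= CC m * K * dt ^ m * (INR m * dt).
Proof. intros Hm Hdt HK Hx H. eapply Rle_trans. apply H. apply Rmult_le_compat_l.
  apply Rmult_le_pos; [apply Rmult_le_pos; [apply CC_pos| auto] | apply pow_le; lra].
  rewrite node_add in *. lra. Qed.


Lemma PIv u T al k i M n dt K0 K1 J : 0 < al < 1 -> (1 <= i <= k)%nat -> (k <= 6)%nat -> (k <= n)%nat -> (n <= M)%nat ->
  0 < dt -> node dt M = T ->
  (forall x, 0 <= x <= T -> forall m, (m <= k + 1)%nat -> ex_derive_n u m x) ->
  (forall x, 0 <= x <= T -> Rabs (Derive_n u (S k) x) <= K1) ->
  (forall x, 0 <= x <= T -> Rabs (Derive_n u k x) <= K0) ->
  (1 <= J <= n - 1)%nat ->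
  exists xP xu,
   is_RInt (fun xi => Rpower (node dt n - xi) (-al) * Derive (Pkin u dt k i n) xi) (node dt (J - 1)) (node dt J) xP /\
   is_RInt (fun xi => Rpower (node dt n - xi) (-al) * Derive u xi) (node dt (J - 1)) (node dt J) xu /\
   Rabs (xP - xu) <= (if Nat.leb J (k - i)
      then dt * (al * Rpower (node dt (n - k + i)) (-al - 1) * (CC (k - 1) * K0 * dt ^ (k - 1) * (INR (k - 1) * dt)))
      else CC k * K1 * dt ^ k * (INR k * dt) * (Rpower (node dt n - node dt J) (-al) - Rpower (node dt n - node dt (J - 1)) (-al))).
Proof.
  intros Hal Hi Hk6 Hkn HnM Hdt HT Hd HK1 HK0 HJ.
  assert (HK0p : 0 <= K0) by (eapply Rle_trans; [apply Rabs_pos|apply (HK0 0)]; rewrite <- HT; split; [lra|apply Rmult_le_pos; [apply pos_INR|lra]]).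
  assert (HK1p : 0 <= K1) by (eapply Rle_trans; [apply Rabs_pos|apply (HK1 0)]; rewrite <- HT; split; [lra|apply Rmult_le_pos; [apply pos_INR|lra]]).
  destruct (piece_form u dt k i n J) as [m [s [Hpf [H1 [H2 [H3 [Hcase _]]]]]]]; try lia.
  set (a := node dt (J - 1)). set (c := node dt J).
  assert (Hac : c - a = dt). { unfold a, c. rewrite node_sub by lia. replace (J - (J - 1))%nat with 1%nat by lia. unfold node; simpl; ring. }
  assert (Ha0 : 0 <= a) by (unfold a; rewrite <- (node0 dt); apply node_le; lia || lra).
  assert (Hct : c < node dt n) by (apply node_lt; auto; lia).
  assert (HnT : node dt n <= T) by (rewrite <- HT; apply node_le; lia || lra).
  assert (Hsa : node dt s <= a) by (apply node_le; lia || lra).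
  assert (Hcs : c <= node dt (s + m)) by (apply node_le; lia || lra).
  assert (HsmT : node dt (s + m) <= T) by (rewrite <- HT; apply node_le; lia || lra).
  assert (Hs0 : 0 <= node dt s) by (rewrite <- (node0 dt); apply node_le; lia || lra).
  destruct (seg u T al n dt k i m s a c) as [xP [xu [V1 [HP [Hu [HV1 Heq]]]]]]; auto; try lra.
  - intros x Hx. split; apply Hd; auto; lia.
  - intros x Hx. rewrite (Derive_Pkin u dt k i n J) by (auto; lia). apply Derive_ext. auto.
  - exists xP, xu. split; [exact HP|split; [exact Hu|]].
    assert (Hea : Defs.interp u dt m s a - u a = 0).
    { unfold a. replace (J - 1)%nat with (s + (J - 1 - s))%nat by lia. rewrite interp_node by (lia || lra). ring. }
    assert (Hec : Defs.interp u dt m s c - u c = 0).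
    { unfold c. replace J with (s + (J - s))%nat by lia. rewrite interp_node by (lia || lra). ring. }
    rewrite Hea, Hec in Heq. replace (xP - xu) with (- V1) by lra. rewrite Rabs_Ropp.
    assert (Hm : (1 <= m <= 6)%nat) by lia.
    assert (Herr : forall K, (forall x, node dt s <= x <= node dt (s + m) -> Rabs (Derive_n u (S m) x) <= K) ->
       forall x, a <= x <= c -> Rabs (Defs.interp u dt m s x - u x) <= CC m * K * dt ^ m * (INR m * dt)).
    { intros K HK x Hx. assert (0 <= K) by (eapply Rle_trans; [apply Rabs_pos| apply (HK (node dt s))]; lra).
      apply err_unif; auto; try lra. apply interp_err; auto; try lra.
      intros y Hy p Hp. apply Hd. lra. lia. }
    destruct (Nat.leb J (k - i)) eqn:EJ.
    + apply Nat.leb_le in EJ. destruct Hcase as [[_ [Hm1 Hs1]]|[Hc1 _]]; [|lia].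
      subst m s.
      set (E1 := CC (k - 1) * K0 * dt ^ (k - 1) * (INR (k - 1) * dt)).
      assert (HE1 : forall x, a <= x <= c -> Rabs (Defs.interp u dt (k - 1) 0 x - u x) <= E1).
      { apply Herr. intros x Hx. replace (S (k - 1)) with k by lia. apply HK0. lra. }
      assert (HE1p : 0 <= E1) by (unfold E1; pose proof (CC_pos (k-1)); pose proof (pos_INR (k - 1)); repeat apply Rmult_le_pos; try apply pow_le; lra).
      assert (Hw : Rpower (node dt n - c) (-al - 1) <= Rpower (node dt (n - k + i)) (-al - 1)).
      { apply rpow_decr. lra. split. rewrite <- (node0 dt). apply node_lt; auto. lia.
        unfold c. rewrite node_sub by lia. apply node_le; lia || lra. }
      eapply Rle_trans. apply (ir_abs_le (fun x => al * Rpower (node dt n - x) (-al - 1) * (Defs.interp u dt (k - 1) 0 x - u x)) (fun _ => al * Rpower (node dt n - c) (-al - 1) * E1) a c). lra. exact HV1. apply ir_const.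
      + intros x Hx. rewrite Rabs_mult, Rabs_mult, Rabs_right by lra. rewrite Rabs_right by (left; apply rpow_pos; lra).
        apply Rmult_le_compat; try apply Rabs_pos. apply Rmult_le_pos; [lra| left; apply rpow_pos; lra].
        apply Rmult_le_compat_l. lra. apply rpow_decr; lra.
        apply HE1; lra.
      + rewrite Hac. apply Rmult_le_compat_l. lra. apply Rmult_le_compat_r; auto. apply Rmult_le_compat_l; lra.
    + apply Nat.leb_gt in EJ. destruct Hcase as [[? _]|[_ Hm1]]; [lia|]. subst m.
      set (E2 := CC k * K1 * dt ^ k * (INR k * dt)).
      assert (HE2 : forall x, a <= x <= c -> Rabs (Defs.interp u dt k s x - u x) <= E2).
      { apply Herr. intros x Hx. apply HK1. lra. }
      apply (ir_abs_le (fun x => al * Rpower (node dt n - x) (-al - 1) * (Defs.interp u dt k s x - u x)) (fun x => E2 * (al * Rpower (node dt n - x) (-al - 1))) a c). lra. exact HV1.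
      apply ir_scal. apply ir_w1. lra.
      intros x Hx. rewrite Rabs_mult, Rabs_mult, Rabs_right by lra. rewrite Rabs_right by (left; apply rpow_pos; lra).
      rewrite Rmult_comm. apply Rmult_le_compat_r. apply Rmult_le_pos; [lra| left; apply rpow_pos; lra].
      apply HE2; lra.
Qed.


Lemma rpow_shift y q : 0 < y -> Rpower y (q - 1) * y = Rpower y q.
Proof. intros. rewrite <- (Rpower_1 y) at 2 by auto. rewrite <- Rpower_plus. f_equal. ring. Qed.

Lemma LI u T al k i M n dt K1 b : 0 < al < 1 -> (1 <= i <= k)%nat -> (k <= 6)%nat -> (k <= n)%nat -> (n <= M)%nat ->
  0 < dt -> node dt M = T ->
  (forall x, 0 <= x <= T -> forall m, (m <= k + 1)%nat -> ex_derive_n u m x) ->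
  (forall x, 0 <= x <= T -> Rabs (Derive_n u (S k) x) <= K1) ->
  node dt (n - 1) < b < node dt n ->
  exists xP xu,
   is_RInt (fun xi => Rpower (node dt n - xi) (-al) * Derive (Pkin u dt k i n) xi) (node dt (n - 1)) b xP /\
   is_RInt (fun xi => Rpower (node dt n - xi) (-al) * Derive u xi) (node dt (n - 1)) b xu /\
   Rabs (xP - xu) <= CC k * K1 * dt ^ k * Rpower dt (1 - al) / (1 - al).
Proof.
  intros Hal Hi Hk6 Hkn HnM Hdt HT Hd HK1 Hb.
  assert (HK1p : 0 <= K1) by (eapply Rle_trans; [apply Rabs_pos|apply (HK1 0)]; rewrite <- HT; split; [lra|apply Rmult_le_pos; [apply pos_INR|lra]]).
  destruct (piece_form u dt k i n n) as [m [s [Hpf [H1 [H2 [H3 [_ Hlast]]]]]]]; try lia.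
  destruct (Hlast eq_refl) as [-> ->].
  set (a := node dt (n - 1)) in *. set (t := node dt n) in *.
  assert (Hta : t - a = dt). { unfold a, t. rewrite node_sub by lia. replace (n - (n - 1))%nat with 1%nat by lia. unfold node; simpl; ring. }
  assert (Ha0 : 0 <= a) by (unfold a; rewrite <- (node0 dt); apply node_le; lia || lra).
  assert (HnT : t <= T) by (unfold t; rewrite <- HT; apply node_le; lia || lra).
  assert (Hsn : (n - k + k = n)%nat) by lia.
  assert (Hsa : node dt (n - k) <= a) by (apply node_le; lia || lra).
  assert (Hs0 : 0 <= node dt (n - k)) by (rewrite <- (node0 dt); apply node_le; lia || lra).
  destruct (seg u T al n dt k i k (n - k) a b) as [xP [xu [V1 [HP [Hu [HV1 Heq]]]]]]; auto; try lra; try (unfold t in *; lra).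
  - intros x Hx. split; apply Hd; auto; lia.
  - intros x Hx. rewrite (Derive_Pkin u dt k i n n) by (auto; try lia; unfold a, t in *; lra). apply Derive_ext. auto.
  - exists xP, xu. split; [exact HP|split; [exact Hu|]].
    assert (Hea : Defs.interp u dt k (n - k) a - u a = 0).
    { unfold a. replace (n - 1)%nat with (n - k + (k - 1))%nat by lia. rewrite interp_node by (lia || lra). ring. }
    rewrite Hea in Heq. fold t in Heq. rewrite Heq.
    set (D := CC k * K1 * dt ^ k).
    assert (HD : 0 <= D) by (unfold D; apply Rmult_le_pos; [apply Rmult_le_pos; [apply CC_pos|auto]|apply pow_le; lra]).
    assert (Herr : forall x, a <= x <= b -> Rabs (Defs.interp u dt k (n - k) x - u x) <= D * (t - x)).
    { intros x Hx. unfold D, t. rewrite <- Hsn at 2. apply interp_err; auto; try lia; try lra.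
      - rewrite Hsn. fold t. lra.
      - intros y Hy p Hp. apply Hd. rewrite Hsn in Hy. fold t in Hy. lra. lia.
      - intros y Hy. apply HK1. rewrite Hsn in Hy. fold t in Hy. lra. }
    assert (HR : 0 < Rpower dt (1 - al)) by (apply rpow_pos; lra).
    assert (Hbd : Rabs (Rpower (t - b) (- al) * (Defs.interp u dt k (n - k) b - u b)) <= D * Rpower dt (1 - al)).
    { rewrite Rabs_mult, Rabs_right by (left; apply rpow_pos; lra).
      eapply Rle_trans. apply Rmult_le_compat_l. left; apply rpow_pos; lra. apply Herr; lra.
      replace (Rpower (t - b) (- al) * (D * (t - b))) with (D * (Rpower (t - b) (1 - al - 1) * (t - b))) by (replace (1 - al - 1) with (-al) by ring; ring).
      rewrite rpow_shift by lra. apply Rmult_le_compat_l; auto. apply rpow_incr; lra. }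
    assert (HV : Rabs V1 <= al * D * ((Rpower (t - a) (1 - al) - Rpower (t - b) (1 - al)) / (1 - al))).
    { apply (ir_abs_le (fun x => al * Rpower (t - x) (-al - 1) * (Defs.interp u dt k (n - k) x - u x)) (fun x => al * D * Rpower (t - x) (-al)) a b). lra. exact HV1.
      apply ir_scal. apply ir_w; lra.
      intros x Hx. rewrite Rabs_mult, Rabs_mult, Rabs_right by lra. rewrite Rabs_right by (left; apply rpow_pos; lra).
      eapply Rle_trans. apply Rmult_le_compat_l. apply Rmult_le_pos; [lra|left; apply rpow_pos; lra]. apply Herr; lra.
      replace (al * Rpower (t - x) (- al - 1) * (D * (t - x))) with (al * D * (Rpower (t - x) (- al - 1) * (t - x))) by ring.
      rewrite rpow_shift by lra. lra. }
    rewrite Hta in HV.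
    assert (0 < Rpower (t - b) (1 - al)) by (apply rpow_pos; lra).
    assert (al * D * ((Rpower dt (1 - al) - Rpower (t - b) (1 - al)) / (1 - al)) <= al * D * (Rpower dt (1 - al) / (1 - al))).
    { apply Rmult_le_compat_l. apply Rmult_le_pos; lra. unfold Rdiv. apply Rmult_le_compat_r. left; apply Rinv_0_lt_compat; lra. lra. }
    replace (Rpower (t - b) (- al) * (Defs.interp u dt k (n - k) b - u b) - 0 - V1) with
      (Rpower (t - b) (- al) * (Defs.interp u dt k (n - k) b - u b) + - V1) by ring.
    eapply Rle_trans. apply Rabs_triang. rewrite Rabs_Ropp.
    replace (D * Rpower dt (1 - al) / (1 - al)) with (D * Rpower dt (1 - al) + al * D * (Rpower dt (1 - al) / (1 - al))) by (field; lra).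
    rewrite Rmult_0_r, Rminus_0_r. lra.
Qed.


Lemma IND u T al k i M n dt K0 K1 j : 0 < al < 1 -> (1 <= i <= k)%nat -> (k <= 6)%nat -> (k <= n)%nat -> (n <= M)%nat ->
  0 < dt -> node dt M = T ->
  (forall x, 0 <= x <= T -> forall m, (m <= k + 1)%nat -> ex_derive_n u m x) ->
  (forall x, 0 <= x <= T -> Rabs (Derive_n u (S k) x) <= K1) ->
  (forall x, 0 <= x <= T -> Rabs (Derive_n u k x) <= K0) ->
  (j <= n - 1)%nat ->
  exists vP vu,
   is_RInt (fun xi => Rpower (node dt n - xi) (-al) * Derive (Pkin u dt k i n) xi) 0 (node dt j) vP /\
   is_RInt (fun xi => Rpower (node dt n - xi) (-al) * Derive u xi) 0 (node dt j) vu /\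
   Rabs (vP - vu) <= INR (Nat.min j (k - i)) *
       (dt * (al * Rpower (node dt (n - k + i)) (-al - 1) * (CC (k - 1) * K0 * dt ^ (k - 1) * (INR (k - 1) * dt))))
     + CC k * K1 * dt ^ k * (INR k * dt) * (Rpower (node dt n - node dt j) (-al) - Rpower (node dt n - node dt 0) (-al)).
Proof.
  intros Hal Hi Hk6 Hkn HnM Hdt HT Hd HK1 HK0.
  assert (HK1p : 0 <= K1) by (eapply Rle_trans; [apply Rabs_pos|apply (HK1 0)]; rewrite <- HT; split; [lra|apply Rmult_le_pos; [apply pos_INR|lra]]).
  assert (HE2 : 0 <= CC k * K1 * dt ^ k * (INR k * dt)).
  { pose proof (CC_pos k). pose proof (pos_INR k). repeat apply Rmult_le_pos; try apply pow_le; lra. }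
  induction j as [|j IH]; intros Hj.
  - exists 0, 0. rewrite node0. split; [|split].
    apply (is_RInt_point (V:=R_NormedModule)). apply (is_RInt_point (V:=R_NormedModule)).
    simpl. rewrite Rminus_0_r, Rabs_R0. lra.
  - destruct IH as [vP [vu [H1 [H2 H3]]]]. lia.
    destruct (PIv u T al k i M n dt K0 K1 (S j)) as [xP [xu [H4 [H5 H6]]]]; auto. lia.
    replace (S j - 1)%nat with j in H4, H5, H6 by lia.
    exists (vP + xP), (vu + xu). split; [|split].
    + exact (is_RInt_Chasles (V:=R_NormedModule) _ _ _ _ _ _ H1 H4).
    + exact (is_RInt_Chasles (V:=R_NormedModule) _ _ _ _ _ _ H2 H5).
    + replace (vP + xP - (vu + xu)) with ((vP - vu) + (xP - xu)) by ring.
      eapply Rle_trans. apply Rabs_triang.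
      assert (Hw : Rpower (node dt n - node dt j) (- al) <= Rpower (node dt n - node dt (S j)) (- al)).
      { apply rpow_decr. lra. split. rewrite node_sub by lia. rewrite <- (node0 dt). apply node_lt; auto; lia.
        assert (node dt j <= node dt (S j)) by (apply node_le; lia || lra). lra. }
      destruct (Nat.leb (S j) (k - i)) eqn:E.
      * apply Nat.leb_le in E. replace (Nat.min (S j) (k - i)) with (S (Nat.min j (k - i))) by lia.
        rewrite S_INR.
        assert (CC k * K1 * dt ^ k * (INR k * dt) * (Rpower (node dt n - node dt j) (- al) - Rpower (node dt n - node dt 0) (- al)) <=
                CC k * K1 * dt ^ k * (INR k * dt) * (Rpower (node dt n - node dt (S j)) (- al) - Rpower (node dt n - node dt 0) (- al))).
        { apply Rmult_le_compat_l; auto. lra. }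
        lra.
      * apply Nat.leb_gt in E. replace (Nat.min (S j) (k - i)) with (Nat.min j (k - i)) by lia.
        lra.
Qed.


Theorem theorem2p6 (alpha T : R) (k i : nat) (u : R -> R) :
  0 < alpha < 1 -> 0 < T ->
  (1 <= i)%nat -> (i <= k)%nat -> (k <= 6)%nat ->
  (* u in C^{k+1}[0,T] *)
  (forall x, 0 <= x <= T -> forall m, (m <= k + 1)%nat -> ex_derive_n u m x) ->
  (forall x, 0 <= x <= T -> continuous (Derive_n u (k + 1)) x) ->
  exists C : R, forall M n : nat,
    (1 <= M)%nat -> (k <= n)%nat -> (n <= M)%nat ->
    let dt := T / INR M in
    ((i < k)%nat ->
      Rabs (Dki alpha k i u dt n - caputo alpha u (node dt n))
        <= C * (Rpower (node dt (n - k + i)) (- alpha - 1) * dt ^ (k + 1)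
                + Rpower dt (INR (k + 1) - alpha))) /\
    (i = k ->
      Rabs (Dki alpha k i u dt n - caputo alpha u (node dt n))
        <= C * Rpower dt (INR (k + 1) - alpha)).
Proof.
  intros Hal HT Hi1 Hik Hk6 Hd Hc.
  set (al := alpha) in *.
  assert (Hk1 : (1 <= k)%nat) by lia.
  replace (k + 1)%nat with (S k) in Hc by lia.
  destruct (cont_bound (Derive_n u (S k)) 0 T) as [K1 [HK1p HK1]]; [lra| exact Hc |].
  destruct (cont_bound (Derive_n u k) 0 T) as [K0 [HK0p HK0]]; [lra| |].
  { intros x Hx. destruct (Hd x Hx (S k) ltac:(lia)) as [l Hl]. eapply ct_deriv. exact Hl. }
  destruct (cont_bound (Derive u) 0 T) as [G0 [HG0p HG0]]; [lra| |].
  { intros x Hx. destruct (Hd x Hx 2%nat ltac:(lia)) as [l Hl]. eapply ct_deriv. exact Hl. }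
  set (g := Rabs (/ Gamma (1 - al))).
  set (P := INR k * al * CC (k - 1) * K0 * INR k + CC k * K1 * INR k + CC k * K1 / (1 - al)).
  exists (g * P). intros M n HM Hkn HnM dt.
  assert (HMr : 1 <= INR M) by (apply (le_INR 1); lia).
  assert (Hdt : 0 < dt) by (unfold dt; apply Rdiv_lt_0_compat; lra).
  assert (HTM : node dt M = T) by (unfold node, dt; field; lra).
  clearbody dt.
  set (t := node dt n).
  assert (Hn1 : (1 <= n)%nat) by lia.
  assert (Htn1 : node dt (n - 1) < t) by (apply node_lt; auto; lia).
  assert (Htn1' : t - node dt (n - 1) = dt).
  { unfold t. rewrite node_sub by lia. replace (n - (n - 1))%nat with 1%nat by lia. unfold node; simpl; ring. }
  assert (Hn10 : 0 <= node dt (n - 1)) by (rewrite <- (node0 dt); apply node_le; lia || lra).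
  assert (HtT : t <= T) by (unfold t; rewrite <- HTM; apply node_le; lia || lra).
  set (c1 := dt * (al * Rpower (node dt (n - k + i)) (-al - 1) * (CC (k - 1) * K0 * dt ^ (k - 1) * (INR (k - 1) * dt)))).
  set (E2 := CC k * K1 * dt ^ k * (INR k * dt)).
  set (Bd := INR (k - i) * c1 + E2 * Rpower dt (-al) + CC k * K1 * dt ^ k * Rpower dt (1 - al) / (1 - al)).
  set (hP := fun xi => Rpower (t - xi) (-al) * Derive (Pkin u dt k i n) xi).
  set (hu := fun xi => Rpower (t - xi) (-al) * Derive u xi).
  assert (HE2 : 0 <= E2).
  { unfold E2. pose proof (CC_pos k). pose proof (pos_INR k). repeat apply Rmult_le_pos; try apply pow_le; lra. }
  assert (StepC : forall b, node dt (n - 1) < b < t -> exists vP vu, is_RInt hP 0 b vP /\ is_RInt hu 0 b vu /\ Rabs (vP - vu) <= Bd).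
  { intros b Hb.
    destruct (IND u T al k i M n dt K0 K1 (n - 1)) as [vP [vu [H1 [H2 H3]]]]; auto; try lia.
    destruct (LI u T al k i M n dt K1 b) as [xP [xu [H4 [H5 H6]]]]; auto; try lia.
    exists (vP + xP), (vu + xu). split; [|split].
    - exact (is_RInt_Chasles (V:=R_NormedModule) _ _ _ _ _ _ H1 H4).
    - exact (is_RInt_Chasles (V:=R_NormedModule) _ _ _ _ _ _ H2 H5).
    - replace (vP + xP - (vu + xu)) with ((vP - vu) + (xP - xu)) by ring.
      eapply Rle_trans. apply Rabs_triang.
      replace (Nat.min (n - 1) (k - i)) with (k - i)%nat in H3 by lia.
      fold t in H3. rewrite Htn1', node0, Rminus_0_r in H3. fold c1 E2 in H3.
      assert (0 < Rpower t (- al)) by (apply rpow_pos; lra).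
      unfold Bd. nra. }
  destruct (C1_D _ (C1_interp u dt k (n - k))) as [_ Hpc].
  destruct (cont_bound (Derive (Defs.interp u dt k (n - k))) (node dt (n - 1)) t) as [G [HGp HG]]; [lra| intros; apply Hpc |].
  destruct (gen_exists hP t (node dt (n - 1)) G al) as [A HA]; auto; try lra.
  { intros b Hb. destruct (StepC b Hb) as [vP [vu [H1 _]]]. exists vP; exact H1. }
  { intros x Hx. unfold hP. rewrite (Derive_Pkin u dt k i n n) by (auto; lia || (fold t; lra)).
    destruct (piece_form u dt k i n n) as [m [s [Hpf [_ [_ [_ [_ Hlast]]]]]]]; try lia.
    destruct (Hlast eq_refl) as [-> ->]. rewrite (Derive_ext _ _ x Hpf).
    rewrite Rabs_mult, Rabs_right by (left; apply rpow_pos; lra). rewrite Rmult_comm.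
    apply Rmult_le_compat_r. left; apply rpow_pos; lra. apply HG; lra. }
  destruct (gen_exists hu t (node dt (n - 1)) G0 al) as [B HB]; auto; try lra.
  { intros b Hb. destruct (StepC b Hb) as [vP [vu [_ [H1 _]]]]. exists vu; exact H1. }
  { intros x Hx. unfold hu.
    rewrite Rabs_mult, Rabs_right by (left; apply rpow_pos; lra). rewrite Rmult_comm.
    apply Rmult_le_compat_r. left; apply rpow_pos; lra. apply HG0; lra. }
  assert (HAB : is_RInt_gen (fun y => hP y - hu y) (at_point 0) (at_left t) (A - B)).
  { exact (is_RInt_gen_minus hP hu A B HA HB). }
  assert (HBd : Rabs (A - B) <= Bd).
  { apply (gen_bound (fun y => hP y - hu y) t (node dt (n - 1))); auto.
    intros b Hb. destruct (StepC b Hb) as [vP [vu [H1 [H2 H3]]]]. exists (vP - vu). split; auto.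
    apply ir_minus; auto. }
  assert (EA : RInt_gen (fun xi => Rpower (node dt n - xi) (- al) * Derive (Pkin u dt k i n) xi) (at_point 0) (at_left (node dt n)) = A).
  { apply is_RInt_gen_unique. exact HA. }
  assert (EB : RInt_gen (fun xi => Rpower (node dt n - xi) (- al) * Derive u xi) (at_point 0) (at_left (node dt n)) = B).
  { apply is_RInt_gen_unique. exact HB. }
  assert (Hdiff : Rabs (Dki al k i u dt n - caputo al u (node dt n)) <= g * Bd).
  { unfold Dki, caputo. rewrite EA, EB. rewrite <- Rmult_minus_distr_l, Rabs_mult. fold g.
    apply Rmult_le_compat_l; auto. unfold g; apply Rabs_pos. }
  assert (Hg : 0 <= g) by (unfold g; apply Rabs_pos).
  set (Rw := Rpower dt (INR (k + 1) - al)).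
  set (Q := dt ^ (k + 1)).
  assert (HRw : 0 < Rw) by (apply rpow_pos; lra).
  assert (HQ : 0 < Q) by (apply pow_lt; lra).
  assert (F1 : E2 * Rpower dt (- al) = CC k * K1 * INR k * Rw).
  { unfold E2, Rw. rewrite Rminus_def, Rpower_plus, Rpower_pow by lra.
    replace (k + 1)%nat with (S k) by lia. simpl pow. ring. }
  assert (F2 : CC k * K1 * dt ^ k * Rpower dt (1 - al) / (1 - al) = CC k * K1 / (1 - al) * Rw).
  { unfold Rw. rewrite plus_INR. replace (INR k + INR 1 - al) with (INR k + (1 - al)) by (simpl; ring).
    rewrite Rpower_plus, Rpower_pow by lra. field. lra. }
  assert (HBd' : Bd = INR (k - i) * c1 + (CC k * K1 * INR k + CC k * K1 / (1 - al)) * Rw).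
  { unfold Bd. rewrite F1. rewrite F2. ring. }
  assert (HP2 : 0 <= CC k * K1 * INR k + CC k * K1 / (1 - al)).
  { pose proof (CC_pos k). pose proof (pos_INR k). apply Rplus_le_le_0_compat.
    repeat apply Rmult_le_pos; lra. unfold Rdiv. repeat apply Rmult_le_pos; try lra. left; apply Rinv_0_lt_compat; lra. }
  assert (HP1 : 0 <= INR k * al * CC (k - 1) * K0 * INR k).
  { pose proof (CC_pos (k - 1)). pose proof (pos_INR k). repeat apply Rmult_le_pos; lra. }
  split.
  - intros Hik'. eapply Rle_trans. exact Hdiff. rewrite Rmult_assoc. apply Rmult_le_compat_l; auto.
    rewrite HBd'. fold Q Rw.
    set (Rp := Rpower (node dt (n - k + i)) (- al - 1)).
    assert (HRp : 0 < Rp) by (apply rpow_pos; rewrite <- (node0 dt); apply node_lt; auto; lia).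
    assert (Fc : c1 = al * CC (k - 1) * K0 * INR (k - 1) * Rp * Q).
    { unfold c1, Q, Rp. replace (k + 1)%nat with ((k - 1) + 2)%nat by lia. rewrite pow_add. simpl pow. ring. }
    rewrite Fc.
    set (A1 := al * CC (k - 1) * K0 * Rp * Q).
    assert (HA1 : 0 <= A1) by (unfold A1; pose proof (CC_pos (k - 1)); repeat apply Rmult_le_pos; lra).
    assert (Hki : INR (k - i) <= INR k) by (apply le_INR; lia).
    assert (Hk1' : INR (k - 1) <= INR k) by (apply le_INR; lia).
    assert (INR (k - i) * INR (k - 1) * A1 <= INR k * INR k * A1).
    { apply Rmult_le_compat_r; auto. apply Rmult_le_compat; try apply pos_INR; auto. }
    unfold P. replace (INR (k - i) * (al * CC (k - 1) * K0 * INR (k - 1) * Rp * Q)) with (INR (k - i) * INR (k - 1) * A1) by (unfold A1; ring).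
    replace ((INR k * al * CC (k - 1) * K0 * INR k + CC k * K1 * INR k + CC k * K1 / (1 - al)) * (Rp * Q + Rw))
      with (INR k * INR k * A1 + (CC k * K1 * INR k + CC k * K1 / (1 - al)) * Rw
            + (INR k * al * CC (k - 1) * K0 * INR k) * Rw + (CC k * K1 * INR k + CC k * K1 / (1 - al)) * (Rp * Q))
      by (unfold A1; ring).
    assert (0 <= INR k * al * CC (k - 1) * K0 * INR k * Rw) by (apply Rmult_le_pos; lra).
    assert (0 <= (CC k * K1 * INR k + CC k * K1 / (1 - al)) * (Rp * Q)) by (apply Rmult_le_pos; [lra| apply Rmult_le_pos; lra]).
    lra.
  - intros ->. eapply Rle_trans. exact Hdiff. rewrite Rmult_assoc. apply Rmult_le_compat_l; auto.
    rewrite HBd'. rewrite Nat.sub_diag. simpl INR. fold Rw. unfold P.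
    assert (0 <= INR k * al * CC (k - 1) * K0 * INR k * Rw) by (apply Rmult_le_pos; lra).
    nra.
Qed.
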